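(* Let $d\ge 1$ and $L_{2d}=2U\oplus 2E_8(-1)\oplus\langle -2d\rangle$. Let $r\in L_{2d}$ be a primitive vector such that the reflection $\sigma_r\colon l\mapsto l-\frac{2(l,r)}{(r,r)}r$ lies in $\mathrm O(L_{2d})$. Then $\sigma_r$ induces $\pm\mathrm{id}$ on the discriminant group $L_{2d}^\vee/L_{2d}$ if and only if either $r^2=\pm2$, or $r^2=\pm 2d$ and $\mathrm{div}(r)\in\{d,2d\}$.
   Context: $U$ is the hyperbolic plane, $E_8(-1)$ the negative definite $E_8$ lattice, $\langle -2d\rangle$ the rank one lattice with generator of square $-2d$. For $l\in L$, $\mathrm{div}(l)$ is the positive generator of the ideal $(l,L)\subset\mathbb Z$. *)

(* Defs.v *)
From HB Require Import structures.
From mathcomp Require Import all_boot all_order all_algebra.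
Set Implicit Arguments. Unset Strict Implicit. Unset Printing Implicit Defensive.
Import Order.TTheory GRing.Theory Num.Theory.
Local Open Scope ring_scope.

(* The lattice L_{2d} = 2U (+) 2E_8(-1) (+) <-2d> is modelled as Z^21 sitting
   inside Q^21 (column vectors 'cV[rat]_21) with the Gram matrix below.
   Coordinates: 0,1 : first U; 2,3 : second U; 4..11 : first E_8(-1);
   12..19 : second E_8(-1); 20 : <-2d>. *)

(* Adjacency of the E_8 Dynkin diagram on nodes 0..7: chain 0-1-2-3-4-5-6,
   node 7 attached to node 4 (arms of lengths 4,2,1 from node 4). *)
Definition e8_adj (i j : nat) : bool :=
  [|| ((i.+1 == j) && (j <= 6))%N, ((j.+1 == i) && (i <= 6))%N,
      ((i == 4) && (j == 7))%N | ((i == 7) && (j == 4))%N].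

Definition gram_entry (d : nat) (i j : nat) : int :=
  if (i == j)%N then
    (if (i < 4)%N then 0 else if (i < 20)%N then - 2%:Z else - (2 * d)%:Z)
  else if (i < 4)%N then
    (if ((j < 4) && (i./2 == j./2))%N then 1 else 0)
  else if [&& (i < 20)%N, (j < 20)%N, (4 <= j)%N & ((i < 12) == (j < 12))%N]
  then (if e8_adj ((i - 4) %% 8) ((j - 4) %% 8) then 1 else 0)
  else 0.

Definition gram (d : nat) : 'M[rat]_21 :=
  \matrix_(i, j) (gram_entry d i j)%:~R.

Definition bil (d : nat) (x y : 'cV[rat]_21) : rat := (x^T *m gram d *m y) 0 0.

Definition inL (x : 'cV[rat]_21) : Prop := forall i, x i 0 \is a Num.int.

Definition inLdual (d : nat) (x : 'cV[rat]_21) : Prop :=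
  forall l, inL l -> bil d x l \is a Num.int.

Definition primitive (r : 'cV[rat]_21) : Prop :=
  inL r /\ r != 0 /\
  forall (k : rat) (v : 'cV[rat]_21), k \is a Num.int -> inL v -> r = k *: v ->
    `|k| = 1.

Definition refl (d : nat) (r l : 'cV[rat]_21) : 'cV[rat]_21 :=
  l - (2 * bil d l r / bil d r r) *: r.

Definition refl_in_OL (d : nat) (r : 'cV[rat]_21) : Prop :=
  bil d r r != 0 /\ forall l, inL l -> inL (refl d r l).

Definition induces_pm_id (d : nat) (r : 'cV[rat]_21) : Prop :=
  exists2 eps : rat, (eps == 1) || (eps == -1) &
    forall x, inLdual d x -> inL (refl d r x - eps *: x).

Definition is_div (d : nat) (r : 'cV[rat]_21) (n : nat) : Prop :=
  (0 < n)%N /\ (forall l, inL l -> exists k : int, bil d l r = n%:R * k%:~R) /\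
  exists2 l, inL l & bil d l r = n%:R.

(* Main.v *)
Require Import Defs.
From mathcomp Require Import all_boot all_order all_algebra.
From mathcomp Require Import ring lra zify.
From Stdlib Require Import Classical.
Import Order.TTheory GRing.Theory Num.Theory.
Local Open Scope ring_scope.

Definition cf (x : 'cV[rat]_21) (k : nat) : rat := x (inord k) 0.
Arguments cf : simpl never.
Lemma cfE (x : 'cV[rat]_21) (i : 'I_21) : x i 0 = cf x i.
Proof. by rewrite /cf inord_val. Qed.

Lemma sum21 (F : 'I_21 -> rat) : \sum_(i < 21) F i =
  F (@Ordinal 21 0 isT) + (F (@Ordinal 21 1 isT) + (F (@Ordinal 21 2 isT) + (F (@Ordinal 21 3 isT) + (F (@Ordinal 21 4 isT) + (F (@Ordinal 21 5 isT) + (F (@Ordinal 21 6 isT) + (F (@Ordinal 21 7 isT) + (F (@Ordinal 21 8 isT) + (F (@Ordinal 21 9 isT) + (F (@Ordinal 21 10 isT) + (F (@Ordinal 21 11 isT) + (F (@Ordinal 21 12 isT) + (F (@Ordinal 21 13 isT) + (F (@Ordinal 21 14 isT) + (F (@Ordinal 21 15 isT) + (F (@Ordinal 21 16 isT) + (F (@Ordinal 21 17 isT) + (F (@Ordinal 21 18 isT) + (F (@Ordinal 21 19 isT) + (F (@Ordinal 21 20 isT))))))))))))))))))))).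
Proof. rewrite !big_ord_recl big_ord0 addr0. do 20 (congr (_ + _); first by congr F; apply: val_inj). by congr F; apply: val_inj. Qed.
Definition bilF (d : nat) (X Y : nat -> rat) : rat :=
  X 0 * Y 1
  + X 1 * Y 0
  + X 2 * Y 3
  + X 3 * Y 2
  + (-2) * X 4 * Y 4
  + (-2) * X 5 * Y 5
  + (-2) * X 6 * Y 6
  + (-2) * X 7 * Y 7
  + (-2) * X 8 * Y 8
  + (-2) * X 9 * Y 9
  + (-2) * X 10 * Y 10
  + (-2) * X 11 * Y 11
  + X 4 * Y 5
  + X 5 * Y 4
  + X 5 * Y 6
  + X 6 * Y 5
  + X 6 * Y 7
  + X 7 * Y 6
  + X 7 * Y 8
  + X 8 * Y 7
  + X 8 * Y 9
  + X 9 * Y 8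
  + X 9 * Y 10
  + X 10 * Y 9
  + X 8 * Y 11
  + X 11 * Y 8
  + (-2) * X 12 * Y 12
  + (-2) * X 13 * Y 13
  + (-2) * X 14 * Y 14
  + (-2) * X 15 * Y 15
  + (-2) * X 16 * Y 16
  + (-2) * X 17 * Y 17
  + (-2) * X 18 * Y 18
  + (-2) * X 19 * Y 19
  + X 12 * Y 13
  + X 13 * Y 12
  + X 13 * Y 14
  + X 14 * Y 13
  + X 14 * Y 15
  + X 15 * Y 14
  + X 15 * Y 16
  + X 16 * Y 15
  + X 16 * Y 17
  + X 17 * Y 16
  + X 17 * Y 18
  + X 18 * Y 17
  + X 16 * Y 19
  + X 19 * Y 16
  + (- (2 * d)%:R) * X 20 * Y 20.

Lemma bilE d x y : bil d x y = bilF d (cf x) (cf y).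
Proof.
rewrite /bil mxE.
under eq_bigr => j _ do rewrite mxE cfE.
under eq_bigr => j _ do under eq_bigr => i _ do rewrite !mxE !cfE.
rewrite sum21 !sum21 /gram_entry /= /bilF.
ring.
Qed.

Definition mkv (f : nat -> rat) : 'cV[rat]_21 := \col_i f i.

Lemma cf_mkv f k : (k < 21)%N -> cf (mkv f) k = f k.
Proof. by move=> hk; rewrite /cf /mkv mxE inordK. Qed.

Lemma cfD x y k : cf (x + y) k = cf x k + cf y k.
Proof. by rewrite /cf mxE. Qed.
Lemma cfN x k : cf (- x) k = - cf x k.
Proof. by rewrite /cf mxE. Qed.
Lemma cfB x y k : cf (x - y) k = cf x k - cf y k.
Proof. by rewrite cfD cfN. Qed.
Lemma cfZ (c : rat) x k : cf (c *: x) k = c * cf x k.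
Proof. by rewrite /cf mxE. Qed.

Lemma inLP x : inL x <-> (forall k, (k < 21)%N -> cf x k \is a Num.int).
Proof.
split=> [h k _|h i]; first exact: h.
by rewrite cfE; apply: h.
Qed.

Lemma inLB x y : inL x -> inL y -> inL (x - y).
Proof. by move=> hx hy i; rewrite !cfE cfB rpredB // -cfE. Qed.
Lemma inLD x y : inL x -> inL y -> inL (x + y).
Proof. by move=> hx hy i; rewrite !cfE cfD rpredD // -cfE. Qed.
Lemma inLZ (c : rat) x : c \is a Num.int -> inL x -> inL (c *: x).
Proof. by move=> hc hx i; rewrite !cfE cfZ rpredM // -cfE. Qed.

Lemma unit_int (m : rat) : m != 0 -> m \is a Num.int -> m^-1 \is a Num.int ->
  m = 1 \/ m = -1.
Proof.
move=> m0 hm hmi.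
have h1 := norm_intr_ge1 hm m0.
have h2 := norm_intr_ge1 hmi (invr_neq0 m0).
rewrite normfV in h2.
have hn : `|m| = 1.
  apply/eqP; rewrite eq_le h1 andbT.
  have hp : 0 < `|m| by rewrite normr_gt0.
  by rewrite -invr_ge1 ?unitfE ?normr_eq0 // ; apply: h2.
case: (ltrP m 0) => hs.
  by right; move: hn; rewrite ltr0_norm // => /eqP; rewrite eqr_oppLR => /eqP.
by left; move: hn; rewrite ger0_norm.
Qed.

Lemma prim_int r c : primitive r -> inL (c *: r) -> c \is a Num.int.
Proof.
case=> hr [r0 hprim] hc.
set p := numq c; set q := denq c.
have qgt0 : 0 < q := denq_gt0 c.
have cop : coprimez q p.
  by rewrite /coprimez /gcdz gcdnC; apply: coprime_num_den.
have hdiv : forall k, (k < 21)%N -> exists m : int, cf r k = (m * q)%:~R.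
  move=> k hk.
  have [m hm] := intrP (hr (inord k)).
  have [z hz] := intrP (hc (inord k)).
  rewrite -/(cf _ k) cfZ in hz; rewrite -/(cf _ k) in hm.
  have e1 : (p * m)%:~R = (z * q)%:~R :> rat.
    by rewrite !intrM numqE -hz hm; ring.
  move/eqP: e1; rewrite eqr_int => /eqP e1.
  have hd : (q %| m)%Z by rewrite -(Gauss_dvdzr _ cop) e1 dvdz_mull.
  by exists (m %/ q)%Z; rewrite divzK // hm.
pose v := (q%:~R : rat)^-1 *: r.
have qn0 : (q%:~R : rat) != 0 by rewrite intr_eq0 gt_eqF.
have hv : inL v.
  apply/inLP => k hk; rewrite /v cfZ.
  have [m ->] := hdiv k hk.
  by rewrite intrM mulrC mulfK // intr_int.
have rv : r = q%:~R *: v by rewrite /v scalerA mulfV // scale1r.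
have := hprim _ _ (intr_int _ q) hv rv.
rewrite gtr0_norm ?ltr0z // => /eqP; rewrite -[1]/(1%:~R) eqr_int => /eqP q1.
by rewrite Qint_def -/q q1.
Qed.

Definition wtab : seq (seq int) := [::
  [:: 0; 1; 0; 0; 0; 0; 0; 0; 0; 0; 0; 0; 0; 0; 0; 0; 0; 0; 0; 0];
  [:: 1; 0; 0; 0; 0; 0; 0; 0; 0; 0; 0; 0; 0; 0; 0; 0; 0; 0; 0; 0];
  [:: 0; 0; 0; 1; 0; 0; 0; 0; 0; 0; 0; 0; 0; 0; 0; 0; 0; 0; 0; 0];
  [:: 0; 0; 1; 0; 0; 0; 0; 0; 0; 0; 0; 0; 0; 0; 0; 0; 0; 0; 0; 0];
  [:: 0; 0; 0; 0; -2; -3; -4; -5; -6; -4; -2; -3; 0; 0; 0; 0; 0; 0; 0; 0];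
  [:: 0; 0; 0; 0; -3; -6; -8; -10; -12; -8; -4; -6; 0; 0; 0; 0; 0; 0; 0; 0];
  [:: 0; 0; 0; 0; -4; -8; -12; -15; -18; -12; -6; -9; 0; 0; 0; 0; 0; 0; 0; 0];
  [:: 0; 0; 0; 0; -5; -10; -15; -20; -24; -16; -8; -12; 0; 0; 0; 0; 0; 0; 0; 0];
  [:: 0; 0; 0; 0; -6; -12; -18; -24; -30; -20; -10; -15; 0; 0; 0; 0; 0; 0; 0; 0];
  [:: 0; 0; 0; 0; -4; -8; -12; -16; -20; -14; -7; -10; 0; 0; 0; 0; 0; 0; 0; 0];
  [:: 0; 0; 0; 0; -2; -4; -6; -8; -10; -7; -4; -5; 0; 0; 0; 0; 0; 0; 0; 0];
  [:: 0; 0; 0; 0; -3; -6; -9; -12; -15; -10; -5; -8; 0; 0; 0; 0; 0; 0; 0; 0];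
  [:: 0; 0; 0; 0; 0; 0; 0; 0; 0; 0; 0; 0; -2; -3; -4; -5; -6; -4; -2; -3];
  [:: 0; 0; 0; 0; 0; 0; 0; 0; 0; 0; 0; 0; -3; -6; -8; -10; -12; -8; -4; -6];
  [:: 0; 0; 0; 0; 0; 0; 0; 0; 0; 0; 0; 0; -4; -8; -12; -15; -18; -12; -6; -9];
  [:: 0; 0; 0; 0; 0; 0; 0; 0; 0; 0; 0; 0; -5; -10; -15; -20; -24; -16; -8; -12];
  [:: 0; 0; 0; 0; 0; 0; 0; 0; 0; 0; 0; 0; -6; -12; -18; -24; -30; -20; -10; -15];
  [:: 0; 0; 0; 0; 0; 0; 0; 0; 0; 0; 0; 0; -4; -8; -12; -16; -20; -14; -7; -10];
  [:: 0; 0; 0; 0; 0; 0; 0; 0; 0; 0; 0; 0; -2; -4; -6; -8; -10; -7; -4; -5];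
  [:: 0; 0; 0; 0; 0; 0; 0; 0; 0; 0; 0; 0; -3; -6; -9; -12; -15; -10; -5; -8]].
Definition halfQ (d : nat) (X : nat -> rat) : rat :=
  X 0 * X 1 + X 2 * X 3 - X 4 ^+ 2 - X 5 ^+ 2 - X 6 ^+ 2 - X 7 ^+ 2 - X 8 ^+ 2 - X 9 ^+ 2 - X 10 ^+ 2 - X 11 ^+ 2 + X 4 * X 5 + X 5 * X 6 + X 6 * X 7 + X 7 * X 8 + X 8 * X 9 + X 9 * X 10 + X 8 * X 11 - X 12 ^+ 2 - X 13 ^+ 2 - X 14 ^+ 2 - X 15 ^+ 2 - X 16 ^+ 2 - X 17 ^+ 2 - X 18 ^+ 2 - X 19 ^+ 2 + X 12 * X 13 + X 13 * X 14 + X 14 * X 15 + X 15 * X 16 + X 16 * X 17 + X 17 * X 18 + X 16 * X 19 - d%:R * X 20 ^+ 2.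

Definition ev : 'cV[rat]_21 := mkv (fun k => if k == 20%N then 1 else 0).
Definition wv (i : nat) : 'cV[rat]_21 := mkv (fun k => (nth 0 (nth [::] wtab i) k)%:~R).

Lemma cf_e k : (k < 21)%N -> cf ev k = if k == 20%N then 1 else 0.
Proof. exact: cf_mkv. Qed.

Lemma ev_inL : inL ev.
Proof. apply/inLP => k hk; rewrite cf_e //; case: ifP => _; [exact: rpred1 | exact: rpred0]. Qed.

Lemma wv_inL i : inL (wv i).
Proof. by apply/inLP => k hk; rewrite cf_mkv // intr_int. Qed.

Lemma bil_er d x : bil d x ev = - (2 * d)%:R * cf x 20.
Proof. rewrite bilE /bilF !cf_mkv //=. ring. Qed.
Lemma bil_el d x : bil d ev x = - (2 * d)%:R * cf x 20.
Proof. rewrite bilE /bilF !cf_mkv //=. ring. Qed.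

Lemma bil_w d x i : (i < 20)%N -> bil d x (wv i) = cf x i /\ bil d (wv i) x = cf x i.
Proof.
move=> hi; rewrite !bilE /bilF !cf_mkv //.
case: i hi => [|i] hi; first by rewrite /=; split; ring.
case: i hi => [|i] hi; first by rewrite /=; split; ring.
case: i hi => [|i] hi; first by rewrite /=; split; ring.
case: i hi => [|i] hi; first by rewrite /=; split; ring.
case: i hi => [|i] hi; first by rewrite /=; split; ring.
case: i hi => [|i] hi; first by rewrite /=; split; ring.
case: i hi => [|i] hi; first by rewrite /=; split; ring.
case: i hi => [|i] hi; first by rewrite /=; split; ring.
case: i hi => [|i] hi; first by rewrite /=; split; ring.
case: i hi => [|i] hi; first by rewrite /=; split; ring.
case: i hi => [|i] hi; first by rewrite /=; split; ring.
case: i hi => [|i] hi; first by rewrite /=; split; ring.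
case: i hi => [|i] hi; first by rewrite /=; split; ring.
case: i hi => [|i] hi; first by rewrite /=; split; ring.
case: i hi => [|i] hi; first by rewrite /=; split; ring.
case: i hi => [|i] hi; first by rewrite /=; split; ring.
case: i hi => [|i] hi; first by rewrite /=; split; ring.
case: i hi => [|i] hi; first by rewrite /=; split; ring.
case: i hi => [|i] hi; first by rewrite /=; split; ring.
case: i hi => [|i] hi; first by rewrite /=; split; ring.
done.
Qed.

Lemma bil_even d v : inL v -> (bil d v v / 2) \is a Num.int.
Proof.
move/inLP => h.
have -> : bil d v v / 2 = halfQ d (cf v) by rewrite bilE /bilF /halfQ; field.
rewrite /halfQ ?(rpredD, rpredB, rpredN, rpredM, rpredX, natr_int) //.
all: by apply: h.
Qed.

Lemma trZ (c : rat) (x : 'cV[rat]_21) : (c *: x)^T = c *: x^T.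
Proof. by apply/matrixP => i j; rewrite !mxE. Qed.
Lemma trD (x y : 'cV[rat]_21) : (x + y)^T = x^T + y^T.
Proof. by apply/matrixP => i j; rewrite !mxE. Qed.
Lemma trN (x : 'cV[rat]_21) : (- x)^T = - x^T.
Proof. by apply/matrixP => i j; rewrite !mxE. Qed.
Lemma bilZl d c x y : bil d (c *: x) y = c * bil d x y.
Proof. by rewrite /bil trZ -!scalemxAl mxE. Qed.
Lemma bilZr d c x y : bil d x (c *: y) = c * bil d x y.
Proof. by rewrite /bil -!scalemxAr mxE. Qed.
Lemma bilDl d x1 x2 y : bil d (x1 + x2) y = bil d x1 y + bil d x2 y.
Proof. by rewrite /bil trD !mulmxDl mxE. Qed.
Lemma bilBl d x1 x2 y : bil d (x1 - x2) y = bil d x1 y - bil d x2 y.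
Proof. by rewrite bilDl -scaleN1r bilZl mulN1r. Qed.

Lemma bil_dec d x y : bil d x y =
  bil d (x - cf x 20 *: ev) (y - cf y 20 *: ev) - (2 * d)%:R * cf x 20 * cf y 20.
Proof. rewrite !bilE /bilF !cfB !cfZ !cf_e //=. ring. Qed.

Lemma inL_split x : (forall k, (k < 20)%N -> cf x k \is a Num.int) ->
  cf x 20 \is a Num.int -> inL x.
Proof.
move=> h h20; apply/inLP => k hk; case: (ltnP k 20) => hk2; first exact: h.
by have -> : k = 20%N by lia.
Qed.

Lemma cf_refl d r x k :
  cf (refl d r x) k = cf x k - (2 * bil d x r / bil d r r) * cf r k.
Proof. by rewrite /refl cfB cfZ. Qed.

Lemma R1 d r : primitive r -> refl_in_OL d r ->
  forall l, inL l -> (2 * bil d l r / bil d r r) \is a Num.int.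
Proof.
move=> hp [n0 hr] l hl; apply: (@prim_int r _ hp).
have -> : (2 * bil d l r / bil d r r) *: r = l - refl d r l.
  by rewrite /refl opprB addrC subrK.
exact: inLB hl (hr l hl).
Qed.

Definition x0 (d : nat) : 'cV[rat]_21 := ((2 * d)%:R)^-1 *: ev.

Lemma bil_x0 d l : (1 <= d)%N -> bil d (x0 d) l = - cf l 20.
Proof.
move=> d1; rewrite /x0 bilZl bil_el.
have : ((2 * d)%:R : rat) != 0 by rewrite pnatr_eq0; lia.
move=> h; field; rewrite pnatr_eq0; lia.
Qed.

Lemma dual_x0 d : (1 <= d)%N -> inLdual d (x0 d).
Proof. by move=> d1 l hl; rewrite bil_x0 // rpredN; apply: (proj1 (inLP l) hl 20). Qed.

Lemma cf_x0 d k : (k < 21)%N -> cf (x0 d) k = if k == 20%N then ((2 * d)%:R)^-1 else 0.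
Proof. by move=> hk; rewrite /x0 cfZ cf_e //; case: ifP => _; rewrite ?mulr1 ?mulr0. Qed.

Lemma dual_coords d x : inLdual d x ->
  (forall i, (i < 20)%N -> cf x i \is a Num.int) /\
  ((2 * d)%:R * cf x 20 \is a Num.int).
Proof.
move=> hx; split.
  move=> i hi; have [<- _] := bil_w d x i hi; apply: hx; exact: wv_inL.
have := hx _ ev_inL; rewrite bil_er mulNr rpredN; exact.
Qed.

Arguments unit_int {m}.
Lemma two0 : (2 : rat) != 0. Proof. by []. Qed.

Lemma forward d r : (1 <= d)%N -> primitive r -> refl_in_OL d r ->
  induces_pm_id d r ->
  bil d r r = 2 \/ bil d r r = -2 \/
      ((bil d r r = (2 * d)%:R \/ bil d r r = - (2 * d)%:R) /\
       (is_div d r d \/ is_div d r (2 * d))).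
Proof.
move=> d1 hp hO [eps heps H].
have hr : inL r := hp.1.
have [n0 _] := hO.
have R := @R1 d r hp hO.
have hev : bil d r r / 2 \is a Num.int := @bil_even d r hr.
have bx0r : bil d (x0 d) r = - cf r 20 := @bil_x0 d r d1.
have Hx := H _ (@dual_x0 d d1).
set n := bil d r r in n0 R hev Hx *.
set t := cf r 20 in bx0r *.
set D : rat := d%:R.
have D0 : D != 0 by rewrite pnatr_eq0 -lt0n.
have e2D : (2 * d)%:R = 2 * D :> rat by rewrite natrM.
have tZ : t \is a Num.int by apply: (proj1 (inLP r) hr 20).
have hA : forall i, (i < 20)%N -> 2 * cf r i / n \is a Num.int.
  move=> i hi; have [_ e] := bil_w d r i hi; rewrite -e; exact: R (wv_inL i).
have Hcf : forall k, cf (refl d r (x0 d) - eps *: x0 d) k =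
    (1 - eps) * cf (x0 d) k + (2 * t / n) * cf r k.
  by move=> k; rewrite cfB cf_refl cfZ bx0r -/n; ring.
case/orP: heps => /eqP ee; subst eps.
- have h1 : 2 * t / n \is a Num.int.
    apply: (@prim_int r _ hp); apply/inLP => k hk.
    by move: (proj1 (inLP _) Hx k hk); rewrite Hcf subrr mul0r add0r cfZ.
  have h2 : 2 / n \is a Num.int.
    apply: (@prim_int r _ hp); apply: inL_split => [k hk|]; rewrite cfZ.
      by rewrite mulrAC; apply: hA.
    by rewrite -/t mulrAC.
  have nh0 : n / 2 != 0 by rewrite mulf_neq0 // invr_neq0.
  have hinv : (n / 2)^-1 \is a Num.int by rewrite invf_div.
  have [hn|hn] := unit_int nh0 hev hinv.
    by left; rewrite -[n](divfK two0) hn mul1r.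
  by right; left; rewrite -[n](divfK two0) hn mulN1r.
- have hC : D^-1 + 2 * t ^+ 2 / n \is a Num.int.
    have := proj1 (inLP _) Hx 20 isT; rewrite Hcf cf_x0 //= e2D.
    have -> : (1 - -1) * (2 * D)^-1 + 2 * t / n * t = D^-1 + 2 * t ^+ 2 / n.
      by field; rewrite D0 n0.
    by [].
  have hD : forall i, (i < 20)%N -> 2 * t / n * cf r i \is a Num.int.
    move=> i hi; have := proj1 (inLP _) Hx i (ltnW hi).
    rewrite Hcf cf_x0; last exact: ltnW hi.
    have -> : (i == 20%N) = false by apply/negbTE; lia.
    by rewrite mulr0 add0r.
  have hz : 2 * D * t / n \is a Num.int.
    apply: (@prim_int r _ hp); apply: inL_split => [k hk|]; rewrite cfZ.
      have -> : 2 * D * t / n * cf r k = D * (2 * t / n * cf r k) by ring.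
      by apply: rpredM; [exact: natr_int | exact: hD].
    have -> : 2 * D * t / n * cf r 20 = D * (D^-1 + 2 * t ^+ 2 / n) - 1.
      by rewrite -/t; field; rewrite D0 n0.
    by apply: rpredB; [apply: rpredM; [exact: natr_int | exact: hC] | exact: rpred1].
  have hm : 2 * D / n \is a Num.int.
    apply: (@prim_int r _ hp); apply: inL_split => [k hk|]; rewrite cfZ.
      have -> : 2 * D / n * cf r k = D * (2 * cf r k / n) by ring.
      by apply: rpredM; [exact: natr_int | exact: hA].
    by rewrite -/t; have -> : 2 * D / n * t = 2 * D * t / n by ring.
  have m0 : 2 * D / n != 0 by rewrite !mulf_neq0 ?invr_neq0.
  have hmi : (2 * D / n)^-1 \is a Num.int.
    have -> : (2 * D / n)^-1 = (D^-1 + 2 * t ^+ 2 / n) * (n / 2) - t ^+ 2.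
      by field; rewrite D0 n0.
    by rewrite rpredB ?rpredX // rpredM.
  have [sg hsg nE] : exists2 sg : rat, (sg = 1 \/ sg = -1) & n = 2 * D * sg.
    have nE : n = 2 * D / (2 * D / n) by field; rewrite D0 n0.
    case: (unit_int m0 hm hmi) => hm1; rewrite hm1 in nE.
      by exists 1; [left | rewrite nE; field].
    by exists (-1); [right | rewrite nE; field].
  have sgZ : sg \is a Num.int by case: hsg => ->; rewrite ?rpredN rpred1.
  right; right; split.
    by case: hsg => e; rewrite nE e e2D; [left | right]; ring.
  have Hdiv : forall l, inL l -> bil d l r / D \is a Num.int.
    move=> l hl; have := R l hl.
    have -> : bil d l r / D = sg * (2 * bil d l r / n).
      by rewrite nE; case: hsg => ->; field.
    by move=> h; rewrite rpredM.
  have [rho hrho hbr] : exists2 rho, inL rho & bil d rho r = 2 * D.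
    exists (sg *: r); first exact: inLZ.
    by rewrite bilZl -/n nE; case: hsg => ->; ring.
  case: (classic (forall l, inL l -> bil d l r / (2 * D) \is a Num.int)) => [hall|hnot].
    right; split; first by lia.
    split; last by exists rho => //; rewrite e2D.
    move=> l hl; have [k hk] := intrP (hall l hl); exists k.
    by rewrite e2D -hk; field.
  left.
  have [l hl0] := not_all_ex_not _ _ hnot.
  have [hl hnl] := imply_to_and _ _ hl0.
  have [k hk] := intrP (Hdiv l hl).
  have hb0 : bil d l r = D * k%:~R by rewrite -hk; field.
  have hk2 : ~~ (2 %| k)%Z.
    apply/negP => h2; apply: hnl.
    rewrite hb0 -(divzK h2) intrM.
    have -> : D * ((k %/ 2)%Z%:~R * 2%:~R) / (2 * D) = (k %/ 2)%Z%:~R.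
      by field.
    exact: intr_int.
  have [h hh] : exists h : int, k = h * 2 + 1.
    exists (k %/ 2)%Z.
    have e1 := divz_eq k 2.
    have g0 : (0 <= (k %% 2)%Z)%R by apply: modz_ge0.
    have g1 : ((k %% 2)%Z < 2)%R by apply: ltz_pmod.
    have g2 : (k %% 2)%Z != 0 by apply/negP => /eqP /dvdz_mod0P; apply/negP.
    lia.
  split; first by lia.
  split.
    move=> l1 hl1; have [k0 hk0] := intrP (Hdiv l1 hl1); exists k0.
    by rewrite -hk0; field.
  exists (l - h%:~R *: rho); first by apply: inLB hl (@inLZ _ _ (intr_int _ h) hrho).
  rewrite bilBl bilZl hbr hb0 hh.
  rewrite -/D. ring.
Qed.

Lemma backward d r : (1 <= d)%N -> primitive r -> refl_in_OL d r ->
  (bil d r r = 2 \/ bil d r r = -2 \/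
      ((bil d r r = (2 * d)%:R \/ bil d r r = - (2 * d)%:R) /\
       (is_div d r d \/ is_div d r (2 * d)))) ->
  induces_pm_id d r.
Proof.
move=> d1 hp hO hcase.
have hr : inL r := hp.1.
have [n0 _] := hO.
set n := bil d r r in n0 hcase.
set t := cf r 20.
set D : rat := d%:R.
have D0 : D != 0 by rewrite pnatr_eq0 -lt0n.
have e2D : (2 * d)%:R = 2 * D :> rat by rewrite natrM.
have tZ : t \is a Num.int by apply: (proj1 (inLP r) hr 20).
have small : 2 / n \is a Num.int -> induces_pm_id d r.
  move=> h2; exists 1; first by rewrite eqxx.
  move=> x hx.
  have -> : refl d r x - 1 *: x = (- (2 * bil d x r / n)) *: r.
    by apply/matrixP => i j; rewrite /refl !mxE -/n; ring.
  apply: (@inLZ _ _ _ hr); rewrite rpredN mulrAC rpredM //; exact: hx.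
case: hcase => [hn | [hn | [hn hdv]]].
- by apply: small; rewrite hn.
- by apply: small; rewrite hn.
exists (-1); first by rewrite eqxx orbT.
have Hdiv : forall l, inL l -> bil d l r / D \is a Num.int.
  case: hdv => [[_ [hk _]] | [_ [hk _]]] l hl; have [k ->] := hk l hl.
    have -> : d%:R * k%:~R / D = k%:~R by rewrite -/D; field.
    exact: intr_int.
  have -> : (2 * d)%:R * k%:~R / D = 2 * k%:~R by rewrite e2D; field.
  by rewrite rpredM ?intr_int.
have [sg hsg nE] : exists2 sg : rat, (sg = 1 \/ sg = -1) & n = 2 * D * sg.
  by case: hn => e; [exists 1; [left | rewrite e e2D mulr1] |
                     exists (-1); [right | rewrite e e2D mulrN1]].
have sgZ : sg \is a Num.int by case: hsg => ->; rewrite ?rpredN rpred1.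
have haD : forall i, (i < 20)%N -> cf r i / D \is a Num.int.
  by move=> i hi; have [_ <-] := bil_w d r i hi; apply: Hdiv; apply: wv_inL.
set b' := D^-1 *: (r - t *: ev).
have hb' : inL b'.
  apply: inL_split => [k hk|]; rewrite /b' cfZ cfB cfZ cf_e.
  - have -> : (k == 20%N) = false by apply/negbTE; lia.
    by rewrite mulr0 subr0 mulrC; apply: haD.
  - by apply: ltnW.
  - by rewrite eqxx mulr1 subrr mulr0 rpred0.
  - by [].
have hq := @bil_even d b' hb'.
have nq : n = D ^+ 2 * (2 * (bil d b' b' / 2)) - 2 * D * t ^+ 2.
  rewrite /n bil_dec -/t.
  have -> : r - t *: ev = D *: b' by rewrite /b' scalerA mulfV // scale1r.
  by rewrite bilZl bilZr e2D; field.
have Q'E : bil d b' b' / 2 = (sg + t ^+ 2) / D.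
  apply: (mulfI D0).
  have h0 : 2 * D * (D * (bil d b' b' / 2) - t ^+ 2 - sg) = 0.
    by rewrite -[0](subrr n) {1}nq nE; ring.
  move: h0 => /eqP; rewrite mulf_eq0 mulf_eq0 (negbTE D0) orbF /= subr_eq0 subr_eq.
  by move=> /eqP ->; field.
move=> x hx.
have [hxi hx20] := @dual_coords d x hx.
set x' := x - cf x 20 *: ev.
have hx' : inL x'.
  apply: inL_split => [k hk|]; rewrite /x' cfB cfZ cf_e.
  - have -> : (k == 20%N) = false by apply/negbTE; lia.
    by rewrite mulr0 subr0; apply: hxi.
  - by apply: ltnW.
  - by rewrite eqxx mulr1 subrr rpred0.
  - by [].
have hB := Hdiv x' hx'.
have hb : bil d x r = bil d x' r - (2 * d)%:R * cf x 20 * t.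
  by rewrite /x' bilBl bilZl bil_el -/t; ring.
have hbZ : bil d x r \is a Num.int by apply: hx.
apply: inL_split => [k hk|]; rewrite cfB cf_refl cfZ -/n.
- have -> : cf x k - 2 * bil d x r / n * cf r k - -1 * cf x k =
      2 * cf x k - sg * bil d x r * (cf r k / D).
    by rewrite nE; case: hsg => ->; field.
  apply: rpredB; [apply: rpredM; [exact: (natr_int _ 2) | exact: hxi] |
    apply: rpredM; [exact: rpredM | exact: haD]].
- rewrite -/t.
  have -> : cf x 20 - 2 * bil d x r / n * t - -1 * cf x 20 =
      - sg * (bil d x' r / D) * t + (2 * d)%:R * cf x 20 * sg * (bil d b' b' / 2).
    by rewrite hb Q'E nE e2D; case: hsg => ->; field.
  apply: rpredD.
    apply: rpredM; [apply: rpredM; [by rewrite rpredN | exact: hB] | exact: tZ].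
  apply: rpredM; [apply: rpredM; [exact: hx20 | exact: sgZ] | exact: hq].
Qed.


Theorem corollary4p4 (d : nat) (r : 'cV[rat]_21) :
  (1 <= d)%N -> primitive r -> refl_in_OL d r ->
  (induces_pm_id d r <->
     (bil d r r = 2 \/ bil d r r = -2 \/
      ((bil d r r = (2 * d)%:R \/ bil d r r = - (2 * d)%:R) /\
       (is_div d r d \/ is_div d r (2 * d))))).
Proof.
move=> d1 hp hO; split; [exact: forward | exact: backward].
Qed.
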